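(* Let $n>k\ge 1$ be integers, not both even, with $n=Mk$ for a positive integer $M$. Let $\alpha=\lceil n/2\rceil-\lfloor (n-k)/2\rfloor$, $\beta=k-\alpha$, and $G=\sqrt{n/k}\,W_n^H\Sigma W_k$. Let $i_0\in\{1,\dots,M\}$ and let $G_k$ be the $k\times k$ submatrix of $G$ consisting of rows $i_0,i_0+M,i_0+2M,\dots,i_0+(k-1)M$. Then $\det(G_kG_k^H)=1$, and the systematic DFT frame $G_{\mathrm{sys}}=GG_k^{-1}$ is tight.
   Context: For a positive integer $l$, $W_l$ denotes the unitary $l\times l$ DFT matrix, $(W_l)_{r,s}=\frac{1}{\sqrt l}e^{-j2\pi(r-1)(s-1)/l}$, and $^H$ denotes conjugate transpose. $\Sigma$ is the $n\times k$ matrix $\begin{pmatrix} I_\alpha & 0\\ 0 & 0\\ 0 & I_\beta\end{pmatrix}$: its first $\alpha$ rows are $(I_\alpha\ 0)$, its last $\beta$ rows are $(0\ I_\beta)$, and its middle $n-k$ rows are zero. A frame with $n\times k$ analysis operator $F$ is tight if $F^HF=cI_k$ for some $c>0$. *)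

(* Defs.v *)
From mathcomp Require Import all_boot all_algebra.
From mathcomp Require Import reals trigo.
From mathcomp Require Export complex.

Set Implicit Arguments.
Unset Strict Implicit.
Unset Printing Implicit Defensive.

Import GRing.Theory Num.Theory.
Local Open Scope ring_scope.
Local Open Scope complex_scope.

Definition adjmx (R : realType) (m n : nat) (A : 'M[R[i]]_(m, n)) : 'M[R[i]]_(n, m) :=
  (map_mx conjc A)^T.

Definition omega (R : realType) (l : nat) : R[i] :=
  (cos (2 * pi / l%:R)) -i* (sin (2 * pi / l%:R)).

(* unitary l x l DFT matrix (0-based indices): (W_l)_{r,s} = l^{-1/2} e^{-j2pi r s / l} *)
Definition DFT (R : realType) (l : nat) : 'M[R[i]]_l :=
  \matrix_(r, s) (((Num.sqrt (l%:R : R))^-1)%:C * omega R l ^+ (r * s)%N).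

Definition alpha (n k : nat) : nat := (uphalf n - (n - k)./2)%N.
Definition beta (n k : nat) : nat := (k - alpha n k)%N.

(* Sigma: first alpha rows (I_alpha 0), last beta rows (0 I_beta), middle zero *)
Definition Sigma (R : realType) (n k : nat) : 'M[R[i]]_(n, k) :=
  \matrix_(r < n, s < k)
    if ((r < alpha n k)%N && (s == r :> nat)) then 1
    else if ((n - beta n k <= r)%N && (s == r - (n - beta n k) + alpha n k :> nat))%N
    then 1 else 0.

Definition Gmat (R : realType) (n k : nat) : 'M[R[i]]_(n, k) :=
  (Num.sqrt (n%:R / k%:R : R))%:C *: (adjmx (DFT R n) *m Sigma R n k *m DFT R k).

Lemma row_sel_proof (n M k : nat) (hn : n = (M * k)%N) (i0 : 'I_M) (t : 'I_k) :
  (i0 + t * M < n)%N.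
Proof.
rewrite hn; have Hi := ltn_ord i0; have Ht := ltn_ord t.
apply: (@leq_trans (M + t * M)); first by rewrite ltn_add2r.
have H : (t.+1 * M <= k * M)%N by rewrite leq_mul2r Ht orbT.
by move: H; rewrite mulSn [(M * k)%N]mulnC.
Qed.

(* 0-based version of row i0 + t M  (t = 0..k-1) *)
Definition row_sel (n M k : nat) (hn : n = (M * k)%N) (i0 : 'I_M) (t : 'I_k) : 'I_n :=
  Ordinal (row_sel_proof hn i0 t).

Definition Gk (R : realType) (n M k : nat) (hn : n = (M * k)%N) (i0 : 'I_M) : 'M[R[i]]_k :=
  rowsub (row_sel hn i0) (Gmat R n k).

Definition tight_frame (R : realType) (n k : nat) (F : 'M[R[i]]_(n, k)) : Prop :=
  exists c : R, 0 < c /\ adjmx F *m F = c%:C%:M.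

(* Main.v *)
Require Import Defs.
From mathcomp Require Import all_boot all_order all_algebra.
From mathcomp Require Import reals trigo complex.
From mathcomp Require Import ring lra zify.
Import Order.TTheory GRing.Theory Num.Theory.
Local Open Scope ring_scope.
Local Open Scope complex_scope.

Lemma cis_mul (R : realType) (a b : R) :
  (cos a -i* sin a) * (cos b -i* sin b) = cos (a+b) -i* sin (a+b).
Proof. rewrite cosD sinD /=. congr Complex; ring. Qed.

Lemma cis_exp (R : realType) (a : R) (m : nat) :
  (cos a -i* sin a) ^+ m = cos (m%:R * a) -i* sin (m%:R * a).
Proof.
elim: m => [|m IH]; first by rewrite expr0 mul0r cos0 sin0 oppr0.
by rewrite exprS IH cis_mul [m.+1%:R]mulrSr mulrDl mul1r addrC.
Qed.

Lemma omegaX (R : realType) (l m : nat) :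
  omega R l ^+ m = cos (m%:R * (2 * pi / l%:R)) -i* sin (m%:R * (2 * pi / l%:R)).
Proof. exact: cis_exp. Qed.

Lemma omega_l (R : realType) (l : nat) : (0 < l)%N -> omega R l ^+ l = 1.
Proof.
move=> l0; rewrite omegaX.
have -> : l%:R * (2 * pi / l%:R) = pi *+ 2 :> R.
  have hl : l%:R != 0 :> R by rewrite pnatr_eq0 -lt0n.
  by rewrite -mulr_natl; field.
by rewrite cos2pi sin2pi oppr0.
Qed.

Lemma omega_M (R : realType) (n M k : nat) : n = (M * k)%N -> (0 < n)%N ->
  omega R n ^+ M = omega R k.
Proof.
move=> hn n0.
have hM : M%:R != 0 :> R by rewrite pnatr_eq0; apply/eqP=> M0; move: n0; rewrite hn M0.
have hk : k%:R != 0 :> R by rewrite pnatr_eq0; apply/eqP=> k0; move: n0; rewrite hn k0 muln0.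
have e : M%:R * (2 * pi / n%:R) = 2 * pi / k%:R :> R.
  rewrite hn natrM; move: (M%:R) (k%:R) hM hk => a b ha hb; field; by rewrite ha hb.
by rewrite omegaX e.
Qed.

Lemma omega_conj (R : realType) (l : nat) : (omega R l)^*%C * omega R l = 1.
Proof.
rewrite /omega /=; set a := 2 * pi / l%:R; have := cos2Dsin2 a.
move=> h; congr Complex; [rewrite -h; ring | ring].
Qed.

Lemma cis_neq1 (R : realType) (x : R) : 0 < x < pi *+ 2 -> cos x -i* sin x != 1.
Proof.
move=> /andP[x0 x2]; apply/eqP => [[c1 s0]].
have s0' : sin x = 0 by rewrite -[sin x]opprK s0 oppr0.
case: (ltrgtP x pi) => hx.
- by have := sin_gt0_pi (x:=x); rewrite x0 hx s0' ltxx => /(_ isT).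
- have := sin_gt0_pi (x:=x - pi).
  rewrite subr_gt0 hx /= ltrBlDr -mulr2n x2 => /(_ isT).
  rewrite -[x in sin x](subrK pi) sinDpi in s0'; move: s0'; lra.
- by move: c1; rewrite hx cospi; lra.
Qed.

Lemma omega_neq1 (R : realType) (l d : nat) : (0 < d < l)%N -> omega R l ^+ d != 1.
Proof.
move=> /andP[d0 dl]; rewrite omegaX; apply: cis_neq1.
have l0 : (0 < l%:R :> R) by rewrite ltr0n (leq_ltn_trans _ dl).
have pi0 := @pi_gt0 R.
apply/andP; split.
  by rewrite !mulr_gt0 // ?invr_gt0 // ltr0n.
have hl : l%:R != 0 :> R by rewrite gt_eqF.
have -> : d%:R * (2 * pi / l%:R) = (pi *+ 2) * (d%:R / l%:R) :> R.
  rewrite -mulr_natl; move: (l%:R) hl => a ha; field; exact: ha.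
have p2 : 0 < pi *+ 2 :> R by rewrite mulr2n; lra.
rewrite -[X in _ < X](mulr1 (pi *+ 2)) ltr_pM2l // ltr_pdivrMr // mul1r ltr_nat //.
Qed.

Lemma conjcM' (R : realType) (a b : R[i]) : (a * b)^*%C = a^*%C * b^*%C.
Proof. exact: rmorphM. Qed.
Lemma conjcX' (R : realType) (a : R[i]) m : (a ^+ m)^*%C = (a^*%C) ^+ m.
Proof. exact: rmorphXn. Qed.
Lemma conjc1' (R : realType) : (1 : R[i])^*%C = 1.
Proof. exact: rmorph1. Qed.

Lemma geom_sum (F : fieldType) (z : F) (l : nat) : z ^+ l = 1 -> z != 1 ->
  \sum_(t < l) z ^+ t = 0.
Proof.
move=> zl z1; have := subrX1 z l; rewrite zl subrr => /esym/eqP.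
by rewrite mulf_eq0 subr_eq0 (negbTE z1) /= => /eqP.
Qed.

Lemma sqrt_inv_sq (R : realType) (l : nat) : (0 < l)%N ->
  ((Num.sqrt (l%:R : R))^-1)%:C * ((Num.sqrt (l%:R : R))^-1)%:C * l%:R = 1 :> R[i].
Proof.
move=> l0; rewrite -rmorphM -(rmorph_nat (real_complex R)) -rmorphM.
rewrite -invfM -expr2 sqr_sqrtr ?ler0n // mulVf ?pnatr_eq0 -?lt0n //.
Qed.

Lemma DFT_unitary (R : realType) (l : nat) : (0 < l)%N ->
  DFT R l *m adjmx (DFT R l) = 1%:M.
Proof.
move=> l0; apply/matrixP => r s; rewrite !mxE.
under eq_bigr => t _ do rewrite !mxE conjcM' conjc_real conjcX' !exprM mulrACA -exprMn.
rewrite -mulr_sumr.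
have := @sqrt_inv_sq R l l0.
move: (omega R l) (@omega_l R l l0) (omega_conj R l) (@omega_neq1 R l) => w wl wc wn.
move: (((Num.sqrt (l%:R : R))^-1)%:C) => c cc.
have cl : (w^*%C) ^+ l = 1 by rewrite -conjcX' wl conjc1'.
have wc' : w * w^*%C = 1 by rewrite mulrC.
case: (eqVneq r s) => [<-|rs].
  have -> : w ^+ r * w^*%C ^+ r = 1 by rewrite -exprMn mulrC wc expr1n.
  under eq_bigr do rewrite expr1n.
  by rewrite sumr_const card_ord cc.
have zl : (w ^+ r * w^*%C ^+ s) ^+ l = 1.
  by rewrite exprMn -!exprM mulnC exprM wl expr1n mulnC exprM cl expr1n mulr1.
rewrite geom_sum ?mulr0 ?(negbTE rs) //.
have hr := ltn_ord r; have hs := ltn_ord s.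
case: (ltngtP r s) => h.
- rewrite -(subnKC (ltnW h)) exprD mulrA -exprMn wc' expr1n mul1r.
  apply/negP => /eqP /(congr1 (@conjc R)); rewrite conjcX' conjcK conjc1' => /eqP.
  apply/negP; apply: wn; rewrite subn_gt0 h /=.
  by apply: leq_ltn_trans (leq_subr _ _) hs.
- rewrite -(subnKC (ltnW h)) exprD mulrAC -exprMn wc' expr1n mul1r.
  apply: wn; rewrite subn_gt0 h /=.
  by apply: leq_ltn_trans (leq_subr _ _) hr.
- by move: rs; rewrite (ord_inj h) eqxx.
Qed.

Lemma alpha_le (n k : nat) : (1 <= k <= n)%N -> (alpha n k <= k)%N.
Proof.
move=> hk; rewrite /alpha uphalf_half.
have h1 := odd_double_half n; have h2 := odd_double_half (n - k).
move: (odd n) (odd (n - k)) h1 h2 => [|] [|] /= h1 h2; rewrite -!muln2 in h1 h2; lia.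
Qed.

Lemma fsig_proof (n k : nat) (hk : (k <= n)%N) (s : 'I_k) :
  ((if (s < alpha n k)%N then s : nat else s + (n - k)) < n)%N.
Proof. have := ltn_ord s; case: ifP => _; lia. Qed.

Definition fsig (n k : nat) (hk : (k <= n)%N) (s : 'I_k) : 'I_n :=
  Ordinal (@fsig_proof n k hk s).

Lemma fsig_inj (n k : nat) (hk : (k <= n)%N) : injective (@fsig n k hk).
Proof.
move=> a b /(congr1 val) /=; have := ltn_ord a; have := ltn_ord b.
move=> ha hb; case: ifP => h1; case: ifP => h2 e; apply: val_inj => /=; lia.
Qed.

Lemma Sigma_E (R : realType) (n k : nat) (hk : (1 <= k <= n)%N) (hk' : (k <= n)%N) :
  Sigma R n k = colsub (@fsig n k hk') 1%:M.
Proof.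
apply/matrixP => r s; rewrite !mxE /beta.
have key : (((r < alpha n k) && (s == r :> nat)) || ((n - (k - alpha n k) <= r) && (s == r - (n - (k - alpha n k)) + alpha n k :> nat)))%N
   = (r == @fsig n k hk' s).
  rewrite -(inj_eq val_inj) /=.
  have ha := @alpha_le n k hk; move: (alpha n k) ha => a ha.
  have hr := ltn_ord r; have hs := ltn_ord s.
  case: ifP => h; apply/idP/idP; lia.
by rewrite -key; case: ifP => //= _; case: ifP.
Qed.


Lemma conjcD' (R : realType) (a b : R[i]) : (a + b)^*%C = a^*%C + b^*%C.
Proof. exact: rmorphD. Qed.
Lemma conjc0' (R : realType) : (0 : R[i])^*%C = 0.
Proof. exact: rmorph0. Qed.

Lemma adjmxM (R : realType) m n p (A : 'M[R[i]]_(m, n)) (B : 'M[R[i]]_(n, p)) :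
  adjmx (A *m B) = adjmx B *m adjmx A.
Proof.
apply/matrixP => i j; rewrite !mxE (big_morph _ (@conjcD' R) (@conjc0' R)).
apply: eq_bigr => l _; rewrite !mxE conjcM' mulrC //.
Qed.

Lemma adjmxK (R : realType) m n (A : 'M[R[i]]_(m, n)) : adjmx (adjmx A) = A.
Proof. by apply/matrixP => i j; rewrite !mxE conjcK. Qed.

Lemma adjmxZ (R : realType) m n (a : R) (A : 'M[R[i]]_(m, n)) :
  adjmx (a%:C *: A) = a%:C *: adjmx A.
Proof. by apply/matrixP => i j; rewrite !mxE conjcM' conjc_real. Qed.

Lemma DFT_unitary' (R : realType) (l : nat) : (0 < l)%N ->
  adjmx (DFT R l) *m DFT R l = 1%:M.
Proof. by move=> l0; apply: mulmx1C; apply: (@DFT_unitary R l l0). Qed.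

Lemma A_iso (R : realType) (n k : nat) (hk : (1 <= k <= n)%N) :
  adjmx (adjmx (DFT R n) *m Sigma R n k) *m (adjmx (DFT R n) *m Sigma R n k) = 1%:M.
Proof.
have hk' : (k <= n)%N by case/andP: hk.
have n0 : (0 < n)%N by case/andP: hk => h1 h2; apply: leq_trans h1 h2.
rewrite (@Sigma_E R n k hk hk') mulmx_colsub mulmx1.
apply/matrixP => i j.
have := congr1 (fun X : 'M[R[i]]_n => X (@fsig n k hk' i) (@fsig n k hk' j)) (@DFT_unitary R n n0).
rewrite !mxE (inj_eq (@fsig_inj n k hk')) => <-.
by apply: eq_bigr => l _; rewrite !mxE conjcK.
Qed.

Lemma AW_iso (R : realType) (n k : nat) (hk : (1 <= k <= n)%N) :
  adjmx (adjmx (DFT R n) *m Sigma R n k *m DFT R k) *m (adjmx (DFT R n) *m Sigma R n k *m DFT R k) = 1%:M.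
Proof.
have k0 : (0 < k)%N by case/andP: hk.
rewrite adjmxM -mulmxA (mulmxA (adjmx (adjmx (DFT R n) *m Sigma R n k))).
by rewrite (@A_iso R n k hk) mul1mx (@DFT_unitary' R k k0).
Qed.

Lemma G_iso (R : realType) (n k : nat) (hk : (1 <= k <= n)%N) :
  adjmx (Gmat R n k) *m Gmat R n k = ((n%:R / k%:R : R)%:C)%:M.
Proof.
rewrite /Gmat adjmxZ -scalemxAl -scalemxAr scalerA (@AW_iso R n k hk) scale_scalar_mx mulr1.
rewrite -rmorphM -expr2 sqr_sqrtr // divr_ge0 // ler0n.
Qed.

Lemma fsig_mod (n k M : nat) (hk' : (k <= n)%N) (hn : n = (M * k)%N) (s : 'I_k) :
  exists q, (@fsig n k hk' s : nat) = (s + k * q)%N.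
Proof.
rewrite /fsig /=; case: ifP => _; first by exists 0%N; rewrite muln0 addn0.
exists (M - 1)%N; congr addn; rewrite hn mulnBr muln1 mulnC //.
Qed.

Lemma sqrt_rel (R : realType) (n k : nat) : (0 < n)%N -> (0 < k)%N ->
  Num.sqrt (n%:R / k%:R : R) * (Num.sqrt (n%:R : R))^-1 = (Num.sqrt (k%:R : R))^-1.
Proof.
move=> n0 k0; rewrite sqrtrM ?ler0n // sqrtrV ?ler0n //.
have : 0 < Num.sqrt (n%:R : R) by rewrite sqrtr_gt0 ltr0n.
have : 0 < Num.sqrt (k%:R : R) by rewrite sqrtr_gt0 ltr0n.
move: (Num.sqrt (n%:R : R)) (Num.sqrt (k%:R : R)) => a b hb ha.
field; rewrite gt_eqF // gt_eqF //.
Qed.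

Definition dvec (R : realType) (n k M : nat) (hk' : (k <= n)%N) (i0 : 'I_M) : 'rV[R[i]]_k :=
  \row_s ((omega R n) ^+ (i0 * @fsig n k hk' s))^*%C.

Lemma Gk_E (R : realType) (n k M : nat) (hk : (1 <= k <= n)%N) (hk' : (k <= n)%N)
  (hn : n = (M * k)%N) (i0 : 'I_M) :
  Gk R hn i0 = adjmx (DFT R k) *m diag_mx (@dvec R n k M hk' i0) *m DFT R k.
Proof.
have k0 : (0 < k)%N by case/andP: hk.
have n0 : (0 < n)%N by case/andP: hk => h1 h2; apply: leq_trans h1 h2.
rewrite /Gk /Gmat (@Sigma_E R n k hk hk') mulmx_colsub mulmx1.
set c := (Num.sqrt (n%:R / k%:R : R))%:C.
have -> : forall (X : 'M[R[i]]_(n, k)), rowsub (row_sel hn i0) (c *: X) = c *: rowsub (row_sel hn i0) X.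
  by move=> X; apply/matrixP => i j; rewrite !mxE.
rewrite -mul_rowsub_mx scalemxAl; congr (_ *m _).
apply/matrixP => t s; rewrite mul_mx_diag !mxE /c.
rewrite !conjcM' !conjc_real mulrA -rmorphM (@sqrt_rel R n k n0 k0) -mulrA -conjcM'.
congr (_ * _^*%C).
have [q hq] := @fsig_mod n k M hk' hn s.
have e : (@fsig n k hk' s * (i0 + t * M) = i0 * @fsig n k hk' s + M * (s * t + k * (q * t)))%N.
  rewrite hq; ring.
rewrite e exprD mulrC exprM (@omega_M R n M k hn n0) exprD [omega R k ^+ (k * _)]exprM (@omega_l R k k0) expr1n mulr1 //.
Qed.

Lemma D_unitary (R : realType) (n k M : nat) (hk' : (k <= n)%N) (i0 : 'I_M) :
  diag_mx (@dvec R n k M hk' i0) *m adjmx (diag_mx (@dvec R n k M hk' i0)) = 1%:M.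
Proof.
apply/matrixP => i j; rewrite mul_diag_mx !mxE.
case: (eqVneq i j) => [<-|ij].
  by rewrite mulr1n conjcK conjcX' -exprMn (omega_conj R n) expr1n.
by rewrite mulr0n conjc0' mulr0.
Qed.

Lemma Gk_unitary (R : realType) (n k M : nat) (hk : (1 <= k <= n)%N)
  (hn : n = (M * k)%N) (i0 : 'I_M) :
  Gk R hn i0 *m adjmx (Gk R hn i0) = 1%:M.
Proof.
have k0 : (0 < k)%N by case/andP: hk.
have hk' : (k <= n)%N by case/andP: hk.
rewrite (@Gk_E R n k M hk hk' hn i0) !adjmxM adjmxK.
set D := diag_mx _.
rewrite -!mulmxA (mulmxA (DFT R k)) (@DFT_unitary R k k0) mul1mx.
rewrite (mulmxA D) (@D_unitary R n k M hk' i0) mul1mx.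
exact: (@DFT_unitary' R k k0).
Qed.

Theorem mainTheorem5 (R : realType) (n k M : nat)
  (hkn : (1 <= k < n)%N) (hodd : ~~ (~~ odd n && ~~ odd k))
  (hn : n = (M * k)%N) (i0 : 'I_M) :
  \det (Gk R hn i0 *m adjmx (Gk R hn i0)) = 1 /\
  tight_frame (Gmat R n k *m invmx (Gk R hn i0)).
Proof.
have hk : (1 <= k <= n)%N by case/andP: hkn => h1 h2; rewrite h1 ltnW.
have k0 : (0 < k)%N by case/andP: hk.
have n0 : (0 < n)%N by case/andP: hk => h1 h2; apply: leq_trans h1 h2.
have GG := @Gk_unitary R n k M hk hn i0.
split; first by rewrite GG det1.
have [Gu _] := mulmx1_unit GG.
have inv : invmx (Gk R hn i0) = adjmx (Gk R hn i0).
  by rewrite -[RHS]mul1mx -(mulVmx Gu) -mulmxA GG mulmx1.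
rewrite inv; exists (n%:R / k%:R); split; first by rewrite divr_gt0 // ltr0n.
rewrite adjmxM adjmxK -mulmxA (mulmxA (adjmx (Gmat R n k))) (@G_iso R n k hk).
by rewrite mul_scalar_mx -scalemxAr GG scale_scalar_mx mulr1.
Qed.
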